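(* In Model A below with $d$ odd, let $I:=-\inf_{t\in\mathbb{R}}\log\big(\varrho(1-\varrho)e^{t}+\tfrac12+\tfrac12(1-2\varrho+2\varrho^2)e^{-t}\big)$ and $\tilde I:=-\inf_{t\in\mathbb{R}}\log\big((\varrho(1-\varrho)+\tfrac14)e^{t}+(\tfrac12(1-2\varrho+2\varrho^2)+\tfrac14)e^{-t}\big)$. Then $$\lim_{d\to\infty,\ d\text{ odd}}\frac1d\log\mathbb{P}\big(\chi(w)=2\text{ under the $c$-segmentation rule with }c=d\big)=-\tilde I,$$ and $I\ge\tilde I$.
   Context: Segmentation rule. Let $d,c$ be positive integers with $c\mid d$. For $x\in\mathbb{R}^d$ and $1\le j\le c$ let $x_j\in\mathbb{R}^{d/c}$ denote its $j$-th block $(x_{(j-1)d/c+1},\dots,x_{jd/c})$, so that $x=x_1\circ\cdots\circ x_c$ (concatenation). Given dictionary words $w^1,\dots,w^K\in\mathbb{R}^d$ ($w^k$ representing class $k$) and a test word $w\in\mathbb{R}^d$, for each $j$ let $U_j\in\{1,\dots,K\}$ be an index $k$ minimizing the Euclidean distance $\|w_j-w^k_j\|$ in $\mathbb{R}^{d/c}$, chosen uniformly at random among all minimizers (independently of everything else). The $c$-segmentation rule assigns to $w$ the class $\chi(w)\in\operatorname{argmax}_k\#\{j:U_j=k\}$, chosen uniformly at random among all maximizers. The case $c=1$ is the Euclidean (nearest-neighbour) rule and $c=d$ is coordinate-by-coordinate comparison. Probabilities are over all random objects including tie-breaks. Model A. Fix $\varrho\in(0,\tfrac12)$. Let $m_1,m_2$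 be independent and uniformly distributed on $\{-1,+1\}^d$. Let $Y^{(0)},Y^{(1)},Y^{(2)}$ be independent random vectors in $\{-1,+1\}^d$, independent of $m_1,m_2$, each with i.i.d. coordinates satisfying $\mathbb{P}(Y_i=1)=1-\varrho$, $\mathbb{P}(Y_i=-1)=\varrho$. Write $x\times y$ for the coordinatewise product. There are $K=2$ classes; the dictionary words are $w^1=Y^{(1)}\times m_1$ (class 1) and $w^2=Y^{(2)}\times m_2$ (class 2), and the test word is $w=Y^{(0)}\times m_1$ (true class 1). *)

(* Defs.v *)
From Stdlib Require Import Reals List.
Import ListNotations.
Open Scope R_scope.

(* All lists of booleans of length n: an enumeration of {-1,+1}^n
   (true encodes +1, false encodes -1). *)
Fixpoint bitlists (n : nat) : list (list bool) :=
  match n with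
  | O => [nil]
  | S n' => flat_map (fun l => [true :: l; false :: l]) (bitlists n')
  end.

Fixpoint tuples (n : nat) (s : list nat) : list (list nat) :=
  match n with
  | O => [nil]
  | S n' => flat_map (fun l => map (fun k => k :: l) s) (tuples n' s)
  end.

Definition sgn (b : bool) : R := if b then 1 else -1.

Definition to_vec (v : list bool) : list R := map sgn v.

Definition cprod (x y : list R) : list R :=
  map (fun p => fst p * snd p) (combine x y).

Definition sumR (l : list R) : R := fold_right Rplus 0 l.
Definition prodR (l : list R) : R := fold_right Rmult 1 l.

Definition euclid (x y : list R) : R :=
  sqrt (sumR (map (fun p => (fst p - snd p) ^ 2) (combine x y))).

(* j-th block (j = 1..c) of x in R^d: coordinates (j-1)d/c+1 .. jd/c *)
Definition block (d c j : nat) (x : list R) : list R :=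
  firstn (d / c) (skipn ((j - 1) * (d / c)) x).

Definition Rleb (a b : R) : bool := if Rle_dec a b then true else false.

Definition argmin_set (K : nat) (f : nat -> R) : list nat :=
  filter (fun k => forallb (fun k' => Rleb (f k) (f k')) (seq 1 K)) (seq 1 K).
Definition argmax_set (K : nat) (f : nat -> R) : list nat :=
  filter (fun k => forallb (fun k' => Rleb (f k') (f k)) (seq 1 K)) (seq 1 K).

Definition unif_pick (S : list nat) (k : nat) : R :=
  if existsb (Nat.eqb k) S then / INR (length S) else 0.

(* Dictionary dict = [w^1; ...; w^K] (w^k represents class k).
   Probability (over the tie-breaks) that the c-segmentation rule assigns
   class k to the test word w.  U = (U_1,...,U_c) ranges over {1..K}^c; the
   U_j are independent, U_j uniform on the minimizers of ||w_j - w^k_j||;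
   chi is then uniform on the maximizers of #{j : U_j = k}. *)
Definition seg_prob (d c : nat) (dict : list (list R)) (w : list R) (k : nat) : R :=
  let K := length dict in
  let dist j k' := euclid (block d c j w) (block d c j (nth (k' - 1) dict nil)) in
  sumR (map (fun u : list nat =>
      prodR (map (fun j => unif_pick (argmin_set K (dist j)) (nth (j - 1) u 0%nat))
                 (seq 1 c))
      * unif_pick (argmax_set K (fun k' => INR (count_occ Nat.eq_dec u k'))) k)
    (tuples c (seq 1 K))).

Definition unif_weight (m : list bool) : R := prodR (map (fun _ : bool => / 2) m).
Definition Y_weight (rho : R) (y : list bool) : R :=
  prodR (map (fun b : bool => if b then 1 - rho else rho) y).

(* Model A: P(chi(w) = 2) under the c-segmentation rule, where
   w^1 = Y1 x m1, w^2 = Y2 x m2, w = Y0 x m1, all independent. *)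
Definition modelA_prob_class2 (rho : R) (d c : nat) : R :=
  sumR (map (fun m1 : list bool => sumR (map (fun m2 : list bool =>
  sumR (map (fun y0 : list bool => sumR (map (fun y1 : list bool => sumR (map (fun y2 : list bool =>
    unif_weight m1 * unif_weight m2 * Y_weight rho y0 * Y_weight rho y1
      * Y_weight rho y2
    * seg_prob d c
        [cprod (to_vec y1) (to_vec m1); cprod (to_vec y2) (to_vec m2)]
        (cprod (to_vec y0) (to_vec m1)) 2)
  (bitlists d))) (bitlists d))) (bitlists d))) (bitlists d))) (bitlists d)).

Definition is_inf (E : R -> Prop) (m : R) : Prop :=
  (forall x, E x -> m <= x) /\ (forall b, (forall x, E x -> b <= x) -> b <= m).

Definition rate_I_fun (rho t : R) : R :=
  ln (rho * (1 - rho) * exp t + / 2 + / 2 * (1 - 2 * rho + 2 * rho ^ 2) * exp (- t)).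
Definition rate_It_fun (rho t : R) : R :=
  ln ((rho * (1 - rho) + / 4) * exp t
      + (/ 2 * (1 - 2 * rho + 2 * rho ^ 2) + / 4) * exp (- t)).

(* Main.v *)
Require Import Defs.
From Stdlib Require Import Reals List Lra Lia FunctionalExtensionality Binomial Factorial ZArith.
Import ListNotations.
Open Scope R_scope.


Lemma sumR_app l1 l2 : sumR (l1 ++ l2) = sumR l1 + sumR l2.
Proof. induction l1; simpl; [ring| rewrite IHl1; ring]. Qed.

Lemma sumR_ext_in {A} (f g : A -> R) l :
  (forall x, In x l -> f x = g x) -> sumR (map f l) = sumR (map g l).
Proof. intro H; rewrite (map_ext_in f g l H); reflexivity. Qed.

Lemma sumR_scal {A} c (f : A -> R) l :
  sumR (map (fun x => c * f x) l) = c * sumR (map f l).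
Proof. induction l; simpl; [ring| rewrite IHl; ring]. Qed.

Lemma sumR_scal_r {A} c (f : A -> R) l :
  sumR (map (fun x => f x * c) l) = sumR (map f l) * c.
Proof. induction l; simpl; [ring| rewrite IHl; ring]. Qed.

Lemma sumR_plus {A} (f g : A -> R) l :
  sumR (map (fun x => f x + g x) l) = sumR (map f l) + sumR (map g l).
Proof. induction l; simpl; [ring| rewrite IHl; ring]. Qed.

Lemma sumR_swap {A B} (f : A -> B -> R) la lb :
  sumR (map (fun x => sumR (map (fun y => f x y) lb)) la)
  = sumR (map (fun y => sumR (map (fun x => f x y) la)) lb).
Proof.
  induction la; simpl.
  - induction lb; simpl; [ring| rewrite <- IHlb; ring].
  - rewrite IHla, sumR_plus. reflexivity.
Qed.

Lemma sumR_le {A} (f g : A -> R) l :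
  (forall x, In x l -> f x <= g x) -> sumR (map f l) <= sumR (map g l).
Proof.
  induction l; simpl; intros H; [lra|].
  apply Rplus_le_compat; auto.
Qed.

Lemma sumR_nonneg {A} (f : A -> R) l :
  (forall x, In x l -> 0 <= f x) -> 0 <= sumR (map f l).
Proof.
  induction l; simpl; intros H; [lra|].
  apply Rplus_le_le_0_compat; auto.
Qed.

Lemma sumR_bl_cons n (F : list bool -> R) :
  sumR (map F (bitlists (S n))) =
  sumR (map (fun l => F (true :: l)) (bitlists n)) +
  sumR (map (fun l => F (false :: l)) (bitlists n)).
Proof.
  simpl. generalize (bitlists n) as L. induction L; simpl; [ring|].
  rewrite IHL; ring.
Qed.

Lemma bitlists_len n l : In l (bitlists n) -> length l = n.
Proof.
  revert l; induction n; simpl; intros l H.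
  - destruct H as [<-|[]]; reflexivity.
  - apply in_flat_map in H. destruct H as [x [Hx H]].
    simpl in H. destruct H as [<-|[<-|[]]]; simpl; f_equal; auto.
Qed.

Lemma sumR_tup_cons n s (F : list nat -> R) :
  sumR (map F (tuples (S n) s)) =
  sumR (map (fun l => sumR (map (fun k => F (k :: l)) s)) (tuples n s)).
Proof.
  simpl. generalize (tuples n s) as L. induction L; simpl; [ring|].
  rewrite map_app, sumR_app, IHL, map_map. ring.
Qed.

Lemma tuples_prop n s u : In u (tuples n s) -> length u = n /\ (forall k, In k u -> In k s).
Proof.
  revert u; induction n; simpl; intros u H.
  - destruct H as [<-|[]]; simpl; split; auto; intros k [].
  - apply in_flat_map in H. destruct H as [x [Hx H]].
    apply in_map_iff in H. destruct H as [k [<- Hk]].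
    destruct (IHn x Hx) as [H1 H2]. simpl; split; [f_equal; auto|].
    intros k' [<-|H]; auto.
Qed.

Definition S1 n (F : list bool -> R) := sumR (map F (bitlists n)).
Definition sb (f : bool -> R) := f true + f false.

Lemma S1_ext n F G : (forall l, In l (bitlists n) -> F l = G l) -> S1 n F = S1 n G.
Proof. apply sumR_ext_in. Qed.

Lemma lvl1 n (F : list bool -> R) phi G :
  (forall b l, F (b :: l) = phi b * G l) -> S1 (S n) F = sb phi * S1 n G.
Proof.
  intro H. unfold S1. rewrite sumR_bl_cons.
  rewrite (sumR_ext_in _ (fun l => phi true * G l)) by (intros; apply H).
  rewrite (sumR_ext_in (fun l => F (false :: l)) (fun l => phi false * G l)) by (intros; apply H).
  rewrite !sumR_scal. unfold sb; ring.
Qed.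

Lemma lvl2 n (F : list bool -> list bool -> R) phi G :
  (forall b1 l1 b2 l2, F (b1 :: l1) (b2 :: l2) = phi b1 b2 * G l1 l2) ->
  S1 (S n) (fun l1 => S1 (S n) (F l1)) = sb (fun b1 => sb (phi b1)) * S1 n (fun l1 => S1 n (G l1)).
Proof.
  intro H. apply lvl1. intros b l. apply lvl1. intros; apply H.
Qed.

Lemma lvl3 n (F : list bool -> list bool -> list bool -> R) phi G :
  (forall b1 l1 b2 l2 b3 l3, F (b1 :: l1) (b2 :: l2) (b3 :: l3) = phi b1 b2 b3 * G l1 l2 l3) ->
  S1 (S n) (fun l1 => S1 (S n) (fun l2 => S1 (S n) (F l1 l2))) =
  sb (fun b1 => sb (fun b2 => sb (phi b1 b2))) * S1 n (fun l1 => S1 n (fun l2 => S1 n (G l1 l2))).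
Proof.
  intro H. apply lvl1. intros b l. apply lvl2. intros; apply H.
Qed.

Lemma lvl4 n (F : list bool -> list bool -> list bool -> list bool -> R) phi G :
  (forall b1 l1 b2 l2 b3 l3 b4 l4, F (b1 :: l1) (b2 :: l2) (b3 :: l3) (b4 :: l4) = phi b1 b2 b3 b4 * G l1 l2 l3 l4) ->
  S1 (S n) (fun l1 => S1 (S n) (fun l2 => S1 (S n) (fun l3 => S1 (S n) (F l1 l2 l3)))) =
  sb (fun b1 => sb (fun b2 => sb (fun b3 => sb (phi b1 b2 b3)))) *
  S1 n (fun l1 => S1 n (fun l2 => S1 n (fun l3 => S1 n (G l1 l2 l3)))).
Proof.
  intro H. apply lvl1. intros b l. apply lvl3. intros; apply H.
Qed.

Lemma lvl5 n (F : list bool -> list bool -> list bool -> list bool -> list bool -> R) phi G :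
  (forall b1 l1 b2 l2 b3 l3 b4 l4 b5 l5,
     F (b1 :: l1) (b2 :: l2) (b3 :: l3) (b4 :: l4) (b5 :: l5) = phi b1 b2 b3 b4 b5 * G l1 l2 l3 l4 l5) ->
  S1 (S n) (fun l1 => S1 (S n) (fun l2 => S1 (S n) (fun l3 => S1 (S n) (fun l4 => S1 (S n) (F l1 l2 l3 l4))))) =
  sb (fun b1 => sb (fun b2 => sb (fun b3 => sb (fun b4 => sb (phi b1 b2 b3 b4))))) *
  S1 n (fun l1 => S1 n (fun l2 => S1 n (fun l3 => S1 n (fun l4 => S1 n (G l1 l2 l3 l4))))).
Proof.
  intro H. apply lvl1. intros b l. apply lvl4. intros; apply H.
Qed.

Definition blk (j : nat) (x : list R) : list R := firstn 1 (skipn (j - 1) x).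

Definition qR (a a1 a2 : R) (k : nat) : R :=
  unif_pick (argmin_set 2 (fun k' => euclid [a] (nth (k' - 1) [[a1]; [a2]] nil))) k.

Fixpoint Pseg (w x1 x2 : list R) (u : list nat) : R :=
  match u, w, x1, x2 with
  | k :: u', a :: w', a1 :: x1', a2 :: x2' => qR a a1 a2 k * Pseg w' x1' x2' u'
  | _, _, _, _ => 1
  end.

Lemma argmin2_ext f g : f 1%nat = g 1%nat -> f 2%nat = g 2%nat -> argmin_set 2 f = argmin_set 2 g.
Proof. intros H1 H2. unfold argmin_set. simpl. rewrite H1, H2. reflexivity. Qed.

Lemma prod_Prec n : forall w x1 x2 u, length w = n -> length x1 = n -> length x2 = n -> length u = n ->
  prodR (map (fun j => unif_pick (argmin_set 2 (fun k' => euclid (blk j w) (blk j (nth (k' - 1) [x1; x2] nil))))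
                 (nth (j - 1) u 0%nat)) (seq 1 n)) = Pseg w x1 x2 u.
Proof.
  induction n; intros w x1 x2 u Hw H1 H2 Hu.
  - destruct u; [|discriminate]. destruct w, x1, x2; reflexivity.
  - destruct w as [|a w]; [discriminate|]. destruct x1 as [|a1 x1]; [discriminate|].
    destruct x2 as [|a2 x2]; [discriminate|]. destruct u as [|k u]; [discriminate|].
    simpl in *. injection Hw; injection H1; injection H2; injection Hu; intros.
    rewrite <- (IHn w x1 x2 u) by assumption.
    f_equal.
    rewrite <- seq_shift, map_map. f_equal. apply map_ext_in. intros j Hj.
      apply in_seq in Hj. destruct j as [|j]; [lia|].
      simpl. rewrite Nat.sub_0_r. f_equal. apply argmin2_ext; unfold blk; simpl; rewrite ?Nat.sub_0_r; reflexivity.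
Qed.

Definition gmaj (u : list nat) : R :=
  unif_pick (argmax_set 2 (fun k' => INR (count_occ Nat.eq_dec u k'))) 2.

Lemma seg_eq d w x1 x2 : (1 <= d)%nat -> length w = d -> length x1 = d -> length x2 = d ->
  seg_prob d d [x1; x2] w 2 =
  sumR (map (fun u => Pseg w x1 x2 u * gmaj u) (tuples d [1%nat; 2%nat])).
Proof.
  intros Hd Hw H1 H2. unfold seg_prob.
  assert (Hb : block d d = blk).
  { extensionality j; extensionality x. unfold block, blk.
    rewrite Nat.div_same by lia. rewrite Nat.mul_1_r. reflexivity. }
  rewrite Hb. simpl length.
  apply sumR_ext_in. intros u Hu. apply tuples_prop in Hu. destruct Hu as [Hu _].
  f_equal. apply prod_Prec; auto.
Qed.

Definition dd (e : bool) : R := if e then 0 else 2.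

Definition qB (e1 e2 : bool) (k : nat) : R :=
  match k with
  | 1%nat => if e1 then (if e2 then /2 else 1) else (if e2 then 0 else /2)
  | 2%nat => if e1 then (if e2 then /2 else 0) else (if e2 then 1 else /2)
  | _ => 0
  end.

Lemma Rleb_t a b : a <= b -> Rleb a b = true.
Proof. intro; unfold Rleb; destruct Rle_dec; [reflexivity| lra]. Qed.
Lemma Rleb_f a b : ~ a <= b -> Rleb a b = false.
Proof. intro; unfold Rleb; destruct Rle_dec; [lra| reflexivity]. Qed.

Lemma qR_dd a a1 a2 e1 e2 k : euclid [a] [a1] = dd e1 -> euclid [a] [a2] = dd e2 ->
  qR a a1 a2 k = qB e1 e2 k.
Proof.
  intros H1 H2. unfold qR.
  rewrite (argmin2_ext _ (fun k' => if Nat.eqb k' 1 then dd e1 else dd e2)) by (simpl; auto).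
  destruct e1, e2; unfold argmin_set, dd; simpl;
  rewrite ?(Rleb_t 0 0), ?(Rleb_t 0 2), ?(Rleb_t 2 2), ?(Rleb_f 2 0) by lra; simpl;
  unfold unif_pick; destruct k as [|[|[|k]]]; simpl; try field; try reflexivity.
Qed.

Lemma euc_sgn a b c e :
  euclid [sgn a * sgn b] [sgn c * sgn e] = dd (Bool.eqb (Bool.eqb a b) (Bool.eqb c e)).
Proof.
  destruct a, b, c, e; unfold euclid, dd, sgn; simpl;
  match goal with |- sqrt ?x = ?v => replace x with (v*v) by ring; apply sqrt_square; lra end.
Qed.

Definition pp (rho : R) : R := rho * (1 - rho) + / 4.
Definition piR (rho : R) (k : nat) : R := if Nat.eqb k 2 then pp rho else 1 - pp rho.

Definition phi (rho : R) (k : nat) (m1 m2 y0 y1 y2 : bool) : R :=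
  / 2 * / 2 * (if y0 then 1 - rho else rho) * (if y1 then 1 - rho else rho)
  * (if y2 then 1 - rho else rho)
  * qR (sgn y0 * sgn m1) (sgn y1 * sgn m1) (sgn y2 * sgn m2) k.

Lemma phi_sum rho k : (k = 1 \/ k = 2)%nat ->
  sb (fun m1 => sb (fun m2 => sb (fun y0 => sb (fun y1 => sb (phi rho k m1 m2 y0 y1))))) = piR rho k.
Proof.
  intro Hk. unfold sb, phi.
  repeat rewrite (qR_dd _ _ _ _ _ k (euc_sgn _ _ _ _) (euc_sgn _ _ _ _)).
  unfold piR, pp. destruct Hk as [-> | ->]; simpl; field.
Qed.

Section Swap.
Variable T : list (list nat).
Variable n : nat.

Lemma swap1 (H : list bool -> list nat -> R) :
  S1 n (fun l => sumR (map (H l) T)) = sumR (map (fun u => S1 n (fun l => H l u)) T).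
Proof. unfold S1. apply sumR_swap. Qed.

Lemma swap2 (H : list bool -> list bool -> list nat -> R) :
  S1 n (fun l1 => S1 n (fun l2 => sumR (map (H l1 l2) T))) =
  sumR (map (fun u => S1 n (fun l1 => S1 n (fun l2 => H l1 l2 u))) T).
Proof.
  transitivity (S1 n (fun l1 => sumR (map (fun u => S1 n (fun l2 => H l1 l2 u)) T))).
  - apply S1_ext; intros; apply swap1.
  - apply (swap1 (fun l1 u => S1 n (fun l2 => H l1 l2 u))).
Qed.

Lemma swap3 (H : list bool -> list bool -> list bool -> list nat -> R) :
  S1 n (fun l1 => S1 n (fun l2 => S1 n (fun l3 => sumR (map (H l1 l2 l3) T)))) =
  sumR (map (fun u => S1 n (fun l1 => S1 n (fun l2 => S1 n (fun l3 => H l1 l2 l3 u)))) T).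
Proof.
  transitivity (S1 n (fun l1 => sumR (map (fun u => S1 n (fun l2 => S1 n (fun l3 => H l1 l2 l3 u))) T))).
  - apply S1_ext; intros; apply swap2.
  - apply (swap1 (fun l1 u => S1 n (fun l2 => S1 n (fun l3 => H l1 l2 l3 u)))).
Qed.

Lemma swap4 (H : list bool -> list bool -> list bool -> list bool -> list nat -> R) :
  S1 n (fun l1 => S1 n (fun l2 => S1 n (fun l3 => S1 n (fun l4 => sumR (map (H l1 l2 l3 l4) T))))) =
  sumR (map (fun u => S1 n (fun l1 => S1 n (fun l2 => S1 n (fun l3 => S1 n (fun l4 => H l1 l2 l3 l4 u))))) T).
Proof.
  transitivity (S1 n (fun l1 => sumR (map (fun u => S1 n (fun l2 => S1 n (fun l3 => S1 n (fun l4 => H l1 l2 l3 l4 u)))) T))).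
  - apply S1_ext; intros; apply swap3.
  - apply (swap1 (fun l1 u => S1 n (fun l2 => S1 n (fun l3 => S1 n (fun l4 => H l1 l2 l3 l4 u))))).
Qed.

Lemma swap5 (H : list bool -> list bool -> list bool -> list bool -> list bool -> list nat -> R) :
  S1 n (fun l1 => S1 n (fun l2 => S1 n (fun l3 => S1 n (fun l4 => S1 n (fun l5 => sumR (map (H l1 l2 l3 l4 l5) T)))))) =
  sumR (map (fun u => S1 n (fun l1 => S1 n (fun l2 => S1 n (fun l3 => S1 n (fun l4 => S1 n (fun l5 => H l1 l2 l3 l4 l5 u)))))) T).
Proof.
  transitivity (S1 n (fun l1 => sumR (map (fun u => S1 n (fun l2 => S1 n (fun l3 => S1 n (fun l4 => S1 n (fun l5 => H l1 l2 l3 l4 l5 u))))) T))).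
  - apply S1_ext; intros; apply swap4.
  - apply (swap1 (fun l1 u => S1 n (fun l2 => S1 n (fun l3 => S1 n (fun l4 => S1 n (fun l5 => H l1 l2 l3 l4 l5 u)))))).
Qed.
End Swap.

Definition Fw (rho : R) (u : list nat) (m1 m2 y0 y1 y2 : list bool) : R :=
  unif_weight m1 * unif_weight m2 * Y_weight rho y0 * Y_weight rho y1 * Y_weight rho y2
  * Pseg (cprod (to_vec y0) (to_vec m1)) (cprod (to_vec y1) (to_vec m1))
         (cprod (to_vec y2) (to_vec m2)) u.

Lemma E_prod rho n : forall u, length u = n -> (forall k, In k u -> k = 1 \/ k = 2)%nat ->
  S1 n (fun m1 => S1 n (fun m2 => S1 n (fun y0 => S1 n (fun y1 => S1 n (Fw rho u m1 m2 y0 y1)))))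
  = prodR (map (piR rho) u).
Proof.
  induction n; intros u Hl Hk.
  - destruct u; [|discriminate]. unfold S1, Fw. simpl.
    unfold unif_weight, Y_weight; simpl; ring.
  - destruct u as [|k u]; [discriminate|].
    rewrite (lvl5 n (Fw rho (k :: u)) (phi rho k) (Fw rho u)).
    + rewrite IHn; [| simpl in Hl; lia | intros; apply Hk; simpl; auto].
      rewrite phi_sum by (apply Hk; simpl; auto). reflexivity.
    + intros. unfold Fw, phi, unif_weight, Y_weight, cprod. simpl. ring.
Qed.

Lemma cprod_len x y : length (cprod x y) = Nat.min (length x) (length y).
Proof. unfold cprod. rewrite length_map, length_combine. reflexivity. Qed.

Lemma main_eq rho d : (1 <= d)%nat ->
  modelA_prob_class2 rho d d =
  sumR (map (fun u => prodR (map (piR rho) u) * gmaj u) (tuples d [1%nat; 2%nat])).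
Proof.
  intro Hd. unfold modelA_prob_class2.
  transitivity (S1 d (fun m1 => S1 d (fun m2 => S1 d (fun y0 => S1 d (fun y1 => S1 d (fun y2 =>
     sumR (map (fun u => Fw rho u m1 m2 y0 y1 y2 * gmaj u) (tuples d [1%nat; 2%nat])))))))).
  - unfold S1.
    apply sumR_ext_in; intros m1 H1; apply sumR_ext_in; intros m2 H2;
    apply sumR_ext_in; intros y0 H3; apply sumR_ext_in; intros y1 H4;
    apply sumR_ext_in; intros y2 H5.
    apply bitlists_len in H1, H2, H3, H4, H5.
    rewrite seg_eq; auto;
      try (rewrite !cprod_len; unfold to_vec; rewrite !length_map; lia).
    rewrite <- sumR_scal. apply sumR_ext_in; intros u _. unfold Fw. ring.
  - rewrite (swap5 (tuples d [1%nat; 2%nat]) d (fun m1 m2 y0 y1 y2 u => Fw rho u m1 m2 y0 y1 y2 * gmaj u)).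
    apply sumR_ext_in; intros u Hu.
    apply tuples_prop in Hu. destruct Hu as [Hl Hk].
    rewrite <- (E_prod rho d u Hl).
    2:{ intros k Hk'. apply Hk in Hk'. simpl in Hk'. intuition. }
    unfold S1. rewrite <- !sumR_scal_r. 
    apply sumR_ext_in; intros; rewrite <- !sumR_scal_r;
    apply sumR_ext_in; intros; rewrite <- !sumR_scal_r;
    apply sumR_ext_in; intros; rewrite <- !sumR_scal_r;
    apply sumR_ext_in; intros; rewrite <- !sumR_scal_r; reflexivity.
Qed.

Definition cnt (u : list nat) (k : nat) : nat := count_occ Nat.eq_dec u k.

Lemma gmaj_lt u : (cnt u 1 < cnt u 2)%nat -> gmaj u = 1.
Proof.
  intro H. unfold gmaj, argmax_set. simpl. fold (cnt u 1) (cnt u 2).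
  apply lt_INR in H.
  rewrite (Rleb_t (INR (cnt u 1)) (INR (cnt u 1))), (Rleb_t (INR (cnt u 2)) (INR (cnt u 2))),
    (Rleb_t (INR (cnt u 1)) (INR (cnt u 2))), (Rleb_f (INR (cnt u 2)) (INR (cnt u 1))) by lra.
  unfold unif_pick; simpl. lra.
Qed.

Lemma gmaj_gt u : (cnt u 2 < cnt u 1)%nat -> gmaj u = 0.
Proof.
  intro H. unfold gmaj, argmax_set. simpl. fold (cnt u 1) (cnt u 2).
  apply lt_INR in H.
  rewrite (Rleb_t (INR (cnt u 1)) (INR (cnt u 1))), (Rleb_t (INR (cnt u 2)) (INR (cnt u 2))),
    (Rleb_f (INR (cnt u 1)) (INR (cnt u 2))), (Rleb_t (INR (cnt u 2)) (INR (cnt u 1))) by lra.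
  unfold unif_pick; simpl. reflexivity.
Qed.

Lemma gmaj_eq u : (cnt u 2 = cnt u 1)%nat -> gmaj u = /2.
Proof.
  intro H. unfold gmaj, argmax_set. simpl. fold (cnt u 1) (cnt u 2). rewrite H.
  rewrite (Rleb_t (INR (cnt u 1)) (INR (cnt u 1))) by lra.
  unfold unif_pick; simpl. reflexivity.
Qed.

Lemma gmaj_ge0 u : 0 <= gmaj u.
Proof.
  destruct (Nat.lt_trichotomy (cnt u 1) (cnt u 2)) as [H|[H|H]].
  - rewrite gmaj_lt by lia; lra.
  - rewrite gmaj_eq by lia; lra.
  - rewrite gmaj_gt by lia; lra.
Qed.

Lemma cnt_cons u k j : cnt (k :: u) j = ((if Nat.eqb k j then 1 else 0) + cnt u j)%nat.
Proof.
  unfold cnt. simpl. destruct (Nat.eq_dec k j) as [->|Hn].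
  - rewrite Nat.eqb_refl. reflexivity.
  - apply Nat.eqb_neq in Hn. rewrite Hn. reflexivity.
Qed.

Lemma cnt_sum u : (forall k, In k u -> k = 1 \/ k = 2)%nat -> (cnt u 1 + cnt u 2 = length u)%nat.
Proof.
  induction u; intros H; [reflexivity|].
  rewrite !cnt_cons. simpl. rewrite <- IHu by (intros; apply H; simpl; auto).
  destruct (H a (or_introl eq_refl)) as [->| ->]; simpl; lia.
Qed.

Lemma prodR_mult {A} (f g : A -> R) l :
  prodR (map (fun x => f x * g x) l) = prodR (map f l) * prodR (map g l).
Proof. induction l; simpl; [ring| rewrite IHl; ring]. Qed.

Lemma prodR_pos {A} (f : A -> R) l : (forall x, 0 < f x) -> 0 < prodR (map f l).
Proof. intro H; induction l; simpl; [lra| apply Rmult_lt_0_compat; auto]. Qed.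

Lemma prodR_nonneg {A} (f : A -> R) l : (forall x, 0 <= f x) -> 0 <= prodR (map f l).
Proof. intro H; induction l; simpl; [lra| apply Rmult_le_pos; auto]. Qed.

Definition hE (E : R) (k : nat) : R := if Nat.eqb k 2 then E else / E.

Lemma prod_hE E u : 0 < E -> (forall k, In k u -> k = 1 \/ k = 2)%nat ->
  prodR (map (hE E) u) * E ^ cnt u 1 = E ^ cnt u 2.
Proof.
  intro HE. induction u; intros H; [simpl; ring|].
  rewrite !cnt_cons. specialize (IHu (fun k Hk => H k (or_intror Hk))).
  destruct (H a (or_introl eq_refl)) as [->| ->]; unfold hE in *; cbn -[cnt] in *;
  rewrite <- IHu; unfold prodR; field; lra.
Qed.

Lemma gmaj_le_hE E u : 1 <= E -> (forall k, In k u -> k = 1 \/ k = 2)%nat ->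
  gmaj u <= prodR (map (hE E) u).
Proof.
  intros HE Hu.
  assert (Hp : 0 < E ^ cnt u 1) by (apply pow_lt; lra).
  assert (Hq := prod_hE E u ltac:(lra) Hu).
  destruct (Nat.lt_trichotomy (cnt u 1) (cnt u 2)) as [H|[H|H]].
  - rewrite gmaj_lt by auto.
    assert (E ^ cnt u 1 <= E ^ cnt u 2) by (apply Rle_pow; lia || lra).
    nra.
  - rewrite gmaj_eq by auto. rewrite H in Hq, Hp. nra.
  - rewrite gmaj_gt by auto. apply prodR_nonneg. intros; unfold hE.
    destruct Nat.eqb; [lra| left; apply Rinv_0_lt_compat; lra].
Qed.

Lemma sum_prod_tuples (f : nat -> R) s n :
  sumR (map (fun u => prodR (map f u)) (tuples n s)) = (sumR (map f s)) ^ n.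
Proof.
  induction n; simpl; [ring|].
  rewrite <- IHn. clear IHn. generalize (tuples n s) as L. induction L; simpl; [ring|].
  rewrite map_app, sumR_app, IHL, map_map. simpl.
  rewrite (sumR_scal_r (prodR (map f a)) f s). ring.
Qed.

Definition ind (b : bool) : R := if b then 1 else 0.

Definition Bn (p : R) (n k : nat) : R :=
  sumR (map (fun u => prodR (map (fun j => if Nat.eqb j 2 then p else 1 - p) u)
                      * ind (Nat.eqb (cnt u 2) k)) (tuples n [1%nat; 2%nat])).

Lemma Bn_S p n k : Bn p (S n) k =
  (1 - p) * Bn p n k + p * (match k with O => 0 | S k' => Bn p n k' end).
Proof.
  unfold Bn. rewrite sumR_tup_cons.
  transitivity (sumR (map (fun l => (1 - p) * (prodR (map (fun j => if Nat.eqb j 2 then p else 1 - p) l)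
        * ind (Nat.eqb (cnt l 2) k)) +
      p * (prodR (map (fun j => if Nat.eqb j 2 then p else 1 - p) l) *
        match k with O => 0 | S k' => ind (Nat.eqb (cnt l 2) k') end)) (tuples n [1%nat; 2%nat]))).
  - apply sumR_ext_in. intros l _. cbn -[cnt]. rewrite !cnt_cons. simpl Nat.eqb.
    unfold prodR; simpl. destruct k; simpl; unfold ind; ring.
  - rewrite sumR_plus, !sumR_scal. f_equal. destruct k.
    + f_equal. transitivity (sumR (map (fun _ : list nat => 0) (tuples n [1%nat; 2%nat]))).
      * apply sumR_ext_in; intros; ring.
      * generalize (tuples n [1%nat; 2%nat]); induction l; simpl; [ring| rewrite IHl; ring].
    + reflexivity.
Qed.

Lemma C_0 n : C n 0 = 1.
Proof. unfold C. simpl. rewrite Nat.sub_0_r. field. apply INR_fact_neq_0. Qed.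
Lemma C_nn n : C n n = 1.
Proof. unfold C. rewrite Nat.sub_diag. simpl. field. apply INR_fact_neq_0. Qed.

Lemma Bn_formula p n : forall k,
  Bn p n k = if Nat.leb k n then C n k * p ^ k * (1 - p) ^ (n - k) else 0.
Proof.
  induction n; intros k.
  - unfold Bn. simpl. unfold cnt, ind, prodR; simpl.
    destruct k; simpl; [rewrite C_0; ring| ring].
  - rewrite Bn_S, IHn. destruct k as [|k].
    + rewrite !Nat.sub_0_r, !C_0. simpl. ring.
    + rewrite IHn. 
      destruct (Nat.lt_trichotomy k n) as [H|[H|H]].
      * replace (Nat.leb (S k) n) with true by (symmetry; apply Nat.leb_le; lia).
        replace (Nat.leb k n) with true by (symmetry; apply Nat.leb_le; lia).
        replace (Nat.leb (S k) (S n)) with true by (symmetry; apply Nat.leb_le; lia).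
        rewrite <- pascal by lia.
        replace (n - k)%nat with (S (n - S k)) by lia.
        replace (S n - S k)%nat with (S (n - S k)) by lia.
        simpl. ring.
      * subst k. rewrite Nat.leb_refl.
        replace (Nat.leb (S n) n) with false by (symmetry; apply Nat.leb_gt; lia).
        replace (Nat.leb (S n) (S n)) with true by (symmetry; apply Nat.leb_le; lia).
        rewrite !C_nn, !Nat.sub_diag. simpl. ring.
      * replace (Nat.leb (S k) n) with false by (symmetry; apply Nat.leb_gt; lia).
        replace (Nat.leb k n) with false by (symmetry; apply Nat.leb_gt; lia).
        replace (Nat.leb (S k) (S n)) with false by (symmetry; apply Nat.leb_gt; lia).
        ring.
Qed.

Lemma C_central n : 4 ^ n <= C (2 * n + 1) (n + 1) * INR (n + 1).
Proof.
  induction n.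
  - simpl. unfold C. simpl. lra.
  - assert (Hc : C (2 * S n + 1) (S n + 1) = C (2 * n + 1) (n + 1) * (2 * (2 * INR n + 3) / (INR n + 2))).
    { unfold C.
      replace (2 * S n + 1)%nat with (S (S (2 * n + 1))) by lia.
      replace (S n + 1)%nat with (S (n + 1)) by lia.
      replace (S (S (2 * n + 1)) - S (n + 1))%nat with (S n) by lia.
      replace (2 * n + 1 - (n + 1))%nat with n by lia.
      change (fact (S (S (2 * n + 1)))) with (S (S (2 * n + 1)) * fact (S (2 * n + 1)))%nat.
      change (fact (S (2 * n + 1))) with (S (2 * n + 1) * fact (2 * n + 1))%nat.
      change (fact (S (n + 1))) with (S (n + 1) * fact (n + 1))%nat.
      change (fact (S n)) with (S n * fact n)%nat.
      rewrite !mult_INR, !S_INR, !plus_INR, !mult_INR. simpl INR.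
      field. repeat split; try apply INR_fact_neq_0; pose proof (pos_INR n); lra. }
    rewrite Hc.
    replace (INR (S n + 1)) with (INR n + 2) by (rewrite plus_INR, S_INR; simpl; ring).
    replace (INR (n + 1)) with (INR n + 1) in IHn by (rewrite plus_INR; simpl; ring).
    simpl pow. pose proof (pos_INR n).
    assert (0 <= C (2 * n + 1) (n + 1)).
    { unfold C. apply Rle_mult_inv_pos; [apply pos_INR|].
      apply Rmult_lt_0_compat; apply INR_fact_lt_0. }
    replace (C (2 * n + 1) (n + 1) * (2 * (2 * INR n + 3) / (INR n + 2)) * (INR n + 2))
      with (C (2 * n + 1) (n + 1) * (2 * (2 * INR n + 3))) by (field; lra).
    nra.
Qed.

Definition Pi (p : R) (u : list nat) : R := prodR (map (fun j => if Nat.eqb j 2 then p else 1 - p) u).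

Definition Q (p : R) (d : nat) : R := sumR (map (fun u => Pi p u * gmaj u) (tuples d [1%nat; 2%nat])).

Lemma Pi_nonneg p u : 0 <= p <= 1 -> 0 <= Pi p u.
Proof. intro; apply prodR_nonneg; intros; destruct Nat.eqb; lra. Qed.

Lemma Q_lower p n : 0 <= p <= 1 -> C (2 * n + 1) (n + 1) * p ^ (n + 1) * (1 - p) ^ n <= Q p (2 * n + 1).
Proof.
  intro Hp.
  assert (H := Bn_formula p (2 * n + 1) (n + 1)).
  replace (Nat.leb (n + 1) (2 * n + 1)) with true in H by (symmetry; apply Nat.leb_le; lia).
  replace (2 * n + 1 - (n + 1))%nat with n in H by lia.
  rewrite <- H. unfold Bn, Q. apply sumR_le. intros u Hu.
  apply tuples_prop in Hu. destruct Hu as [Hl Hk].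
  assert (Hk' : forall k, In k u -> k = 1%nat \/ k = 2%nat).
  { intros k Hin. apply Hk in Hin. simpl in Hin. intuition. }
  fold (Pi p u). pose proof (Pi_nonneg p u Hp).
  destruct (Nat.eqb (cnt u 2) (n + 1)) eqn:E; unfold ind; simpl.
  - apply Nat.eqb_eq in E. pose proof (cnt_sum u Hk'). rewrite gmaj_lt by lia. lra.
  - pose proof (gmaj_ge0 u). nra.
Qed.

Lemma Q_upper p E d : 0 <= p <= 1 -> 1 <= E -> Q p d <= ((1 - p) / E + p * E) ^ d.
Proof.
  intros Hp HE. unfold Q.
  apply Rle_trans with (sumR (map (fun u => prodR (map (fun j => (if Nat.eqb j 2 then p else 1 - p) * hE E j) u))
      (tuples d [1%nat; 2%nat]))).
  - apply sumR_le. intros u Hu. apply tuples_prop in Hu. destruct Hu as [_ Hk].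
    rewrite prodR_mult. apply Rmult_le_compat_l; [apply Pi_nonneg; auto|].
    apply gmaj_le_hE; auto. intros k Hin. apply Hk in Hin. simpl in Hin. intuition.
  - rewrite sum_prod_tuples. right. f_equal. unfold hE. simpl. field. lra.
Qed.

Lemma ln_le' a b : 0 < a -> a <= b -> ln a <= ln b.
Proof. intros Ha [H| ->]; [left; apply ln_increasing; auto| right; reflexivity]. Qed.

Lemma ln_bound x : 0 < x -> ln x < x.
Proof. intro Hx. pose proof (exp_ineq1_le (ln x)). rewrite exp_ln in H by auto. lra. Qed.

Lemma cv_lemma (x : nat -> R) (L c : R) :
  (forall n, L - (c + ln (INR n + 1)) / INR (2 * n + 1) <= x n <= L) -> Un_cv x L.
Proof.
  intros H eps Heps.
  set (K := Rabs c). set (M := (K + 2) / eps).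
  assert (HK : 0 <= K) by apply Rabs_pos.
  assert (HM : 0 < M) by (unfold M; apply Rdiv_lt_0_compat; lra).
  destruct (archimed (M * M)) as [Hup _].
  assert (Hz : (0 <= up (M * M))%Z).
  { apply le_IZR. simpl. nra. }
  exists (Z.to_nat (up (M * M))). intros n Hn. unfold R_dist.
  destruct (H n) as [H1 H2].
  assert (Hn' : M * M < INR n + 1).
  { apply le_INR in Hn. rewrite INR_IZR_INZ, Z2Nat.id in Hn by auto. lra. }
  set (s := sqrt (INR n + 1)).
  pose proof (pos_INR n).
  assert (Hs2 : s * s = INR n + 1) by (apply sqrt_sqrt; lra).
  assert (Hs0 : 0 < s) by (apply sqrt_lt_R0; lra).
  assert (HsM : M < s) by nra.
  assert (Hs1 : 1 <= s) by nra.
  assert (Hln : ln (INR n + 1) < 2 * s).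
  { rewrite <- Hs2, ln_mult by auto. pose proof (ln_bound s Hs0). lra. }
  assert (Hd : INR (2 * n + 1) = 2 * (INR n + 1) - 1) by (rewrite plus_INR, mult_INR; simpl; ring).
  rewrite Hd in H1.
  assert (Hc : c <= K) by (unfold K; apply Rle_abs).
  assert (HMe : M * eps = K + 2) by (unfold M; field; lra).
  assert (Hkey : c + ln (INR n + 1) < eps * (2 * (INR n + 1) - 1)).
  { assert (K + 2 * s < eps * (s * s)) by nra. nra. }
  assert (Hq : (c + ln (INR n + 1)) / (2 * (INR n + 1) - 1) < eps).
  { apply (Rmult_lt_reg_r (2 * (INR n + 1) - 1)); [lra|].
    unfold Rdiv. rewrite Rmult_assoc, Rinv_l by lra. lra. }
  rewrite Rabs_left1 by lra. lra.
Qed.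

Theorem mainTheorem2 (rho I It : R) :
  0 < rho < / 2 ->
  is_inf (fun x => exists t : R, x = rate_I_fun rho t) (- I) ->
  is_inf (fun x => exists t : R, x = rate_It_fun rho t) (- It) ->
  Un_cv (fun n : nat =>
           / INR (2 * n + 1) * ln (modelA_prob_class2 rho (2 * n + 1) (2 * n + 1)))
        (- It)
  /\ I >= It.
Proof.
  intros Hrho [HI1 HI2] [Ht1 Ht2].
  set (p := pp rho).
  assert (Hp : / 4 < p < / 2) by (unfold p, pp; split; nra).
  set (E := sqrt ((1 - p) / p)).
  assert (HE2 : E * E = (1 - p) / p) by (apply sqrt_sqrt; left; apply Rdiv_lt_0_compat; lra).
  assert (HE0 : 0 < E) by (apply sqrt_lt_R0; apply Rdiv_lt_0_compat; lra).
  assert (HE1 : 1 <= E).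
  { assert (1 <= (1 - p) / p) by (apply (Rmult_le_reg_r p); [lra|]; unfold Rdiv; rewrite Rmult_assoc, Rinv_l; lra).
    nra. }
  set (v := (1 - p) / E + p * E).
  assert (HvE : v * E = 2 * (1 - p)).
  { unfold v. rewrite Rmult_plus_distr_r. replace (p * E * E) with (p * (E * E)) by ring.
    rewrite HE2. field. lra. }
  assert (Hv0 : 0 < v) by (unfold v; apply Rplus_lt_0_compat; [apply Rdiv_lt_0_compat|]; nra).
  assert (Hvv : v * v = 4 * p * (1 - p)).
  { assert (H : (v * E) * (v * E) = 4 * (1 - p) * (1 - p)) by (rewrite HvE; ring).
    replace (v * E * (v * E)) with (v * v * (E * E)) in H by ring. rewrite HE2 in H.
    apply (Rmult_eq_reg_r ((1 - p) / p)); [ rewrite H; field; lra |].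
    apply Rgt_not_eq, Rdiv_lt_0_compat; lra. }
  set (L := ln (4 * p * (1 - p)) / 2).
  assert (HlnV : ln v = L).
  { unfold L. rewrite <- Hvv, ln_mult by auto. lra. }
  assert (Hf : forall t, rate_It_fun rho t = ln (p * exp t + (1 - p) * exp (- t))).
  { intro t. unfold rate_It_fun, p, pp. apply f_equal. field. }
  assert (HfL : forall t, L <= rate_It_fun rho t).
  { intro t. rewrite Hf. set (a := exp t). rewrite exp_Ropp. fold a.
    assert (Ha : 0 < a) by apply exp_pos.
    set (b := / a). assert (Hab : a * b = 1) by (unfold b; field; lra).
    assert (Hb : 0 < b) by (unfold b; apply Rinv_0_lt_compat; auto).
    set (x := p * a + (1 - p) * b).
    assert (Hx : 0 < x) by (unfold x; apply Rplus_lt_0_compat; apply Rmult_lt_0_compat; lra).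
    assert (Hxx : 4 * p * (1 - p) <= x * x).
    { pose proof (Rle_0_sqr (p * a - (1 - p) * b)). unfold Rsqr in H. unfold x.
      replace (4 * p * (1 - p)) with (4 * p * (1 - p) * (a * b)) by (rewrite Hab; ring). nra. }
    unfold L. assert (ln (4 * p * (1 - p)) <= ln (x * x)) by (apply ln_le'; nra).
    rewrite (ln_mult x x Hx Hx) in H.  lra. }
  assert (HIt : - It = L).
  { apply Rle_antisym.
    - apply Ht1. exists (ln E). rewrite Hf, exp_Ropp, exp_ln by auto.
      rewrite <- HlnV. f_equal. unfold v. field. lra.
    - apply Ht2. intros x [t ->]. apply HfL. }
  split.
  - rewrite HIt.
    apply (cv_lemma _ L (L - ln p)).
    intro n.
    assert (Hmain := main_eq rho (2 * n + 1) ltac:(lia)).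
    unfold piR in Hmain. fold p in Hmain.
    change (sumR (map (fun u => prodR (map (fun k => if Nat.eqb k 2 then p else 1 - p) u) * gmaj u)
        (tuples (2 * n + 1) [1%nat; 2%nat]))) with (Q p (2 * n + 1)) in Hmain.
    rewrite Hmain.
    assert (Hlo := Q_lower p n ltac:(lra)).
    assert (Hup := Q_upper p E (2 * n + 1) ltac:(lra) HE1). fold v in Hup.
    assert (HC := C_central n).
    pose proof (pos_INR n).
    assert (HINR : INR (n + 1) = INR n + 1) by (rewrite plus_INR; simpl; ring).
    rewrite HINR in HC.
    assert (Hd : INR (2 * n + 1) = 2 * INR n + 1) by (rewrite plus_INR, mult_INR; simpl; ring).
    rewrite Hd.
    set (lowv := 4 ^ n / (INR n + 1) * p ^ (n + 1) * (1 - p) ^ n).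
    assert (Hpow : 0 < p ^ (n + 1) * (1 - p) ^ n) by (apply Rmult_lt_0_compat; apply pow_lt; lra).
    assert (Hlow0 : 0 < lowv).
    { unfold lowv. apply Rmult_lt_0_compat; [apply Rmult_lt_0_compat|]; try (apply pow_lt; lra).
      apply Rdiv_lt_0_compat; [apply pow_lt|]; lra. }
    assert (Hlow : lowv <= Q p (2 * n + 1)).
    { apply Rle_trans with (C (2 * n + 1) (n + 1) * p ^ (n + 1) * (1 - p) ^ n); auto.
      unfold lowv. rewrite !Rmult_assoc. apply Rmult_le_compat_r; [lra|].
      apply (Rmult_le_reg_r (INR n + 1)); [lra|]. unfold Rdiv. rewrite Rmult_assoc, Rinv_l by lra. lra. }
    assert (HQ0 : 0 < Q p (2 * n + 1)) by lra.
    assert (Hln_up : ln (Q p (2 * n + 1)) <= (2 * INR n + 1) * L).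
    { rewrite <- HlnV, <- Hd, <- ln_pow by auto. apply ln_le'; auto. }
    assert (Hln_lo : ln lowv = 2 * INR n * L + ln p - ln (INR n + 1)).
    { unfold lowv, L. unfold Rdiv.
      rewrite !ln_mult by (repeat (apply Rmult_lt_0_compat || apply pow_lt || apply Rinv_0_lt_compat); lra).
      rewrite ln_Rinv, !ln_pow by lra.
      rewrite HINR. field. }
    assert (Hlo2 : ln lowv <= ln (Q p (2 * n + 1))) by (apply ln_le'; auto).
    split.
    + apply (Rmult_le_reg_l (2 * INR n + 1)); [lra|].
      rewrite <- Rmult_assoc, Rinv_r, Rmult_1_l by lra.
      replace ((2 * INR n + 1) * (L - (L - ln p + ln (INR n + 1)) / (2 * INR n + 1)))
        with (2 * INR n * L + ln p - ln (INR n + 1)) by (field; lra).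
      lra.
    + apply (Rmult_le_reg_l (2 * INR n + 1)); [lra|].
      rewrite <- Rmult_assoc, Rinv_r, Rmult_1_l by lra. lra.
  -
    assert (HIle : - I <= - It).
    { apply Ht2. intros x [t ->]. apply Rle_trans with (rate_I_fun rho t).
      - apply HI1. exists t. reflexivity.
      - unfold rate_I_fun, rate_It_fun. set (a := exp t). rewrite exp_Ropp. fold a.
        assert (Ha : 0 < a) by apply exp_pos.
        set (b := / a). assert (Hab : a * b = 1) by (unfold b; field; lra).
        assert (Hb : 0 < b) by (unfold b; apply Rinv_0_lt_compat; auto).
        assert (Hq : 0 < 1 - 2 * rho + 2 * rho ^ 2) by nra.
        assert (Hr : 0 < rho * (1 - rho)) by nra.
        apply ln_le'.
        + assert (0 < rho * (1 - rho) * a) by (apply Rmult_lt_0_compat; lra).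
          assert (0 < / 2 * (1 - 2 * rho + 2 * rho ^ 2) * b) by
            (apply Rmult_lt_0_compat; [apply Rmult_lt_0_compat|]; lra).
          lra.
        + assert (Hab2 : 2 <= a + b). { pose proof (Rle_0_sqr (a - b)). unfold Rsqr in *. assert (4 <= (a + b) * (a + b)) by nra. nra. }
          match goal with |- ?l <= ?r => replace r with (l + (a + b - 2) / 4) by field end.
          lra. }
    lra.
Qed.
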